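(* Let $\sigma$ be the softmax-1 activation, take $m=0$, $r=0$ and unspecialized biases $b=\tilde b\mathbf 1_H$ with $\tilde b\in\mathbb R$. Then for every $h\in[H]$, $$\partial_{b_h}\tilde{\mathcal E}_\sigma(0,0,b,v)=-2\Big(\frac{Lv}{L+e^{\tilde b}}-1\Big)\frac vH\frac{e^{\tilde b}}{(L+e^{\tilde b})^2},\qquad \partial_v\tilde{\mathcal E}_\sigma(0,0,b,v)=2\Big(\frac{Lv}{L+e^{\tilde b}}-1\Big)\frac1{L+e^{\tilde b}}.$$ The fixed points of the corresponding gradient-flow system satisfy $Lv=L+e^{\tilde b}$ and they are attractive. Finally, at initialization $b=0$, $v=1$: $\partial_{b_h}\tilde{\mathcal E}_\sigma(0,0,0,1)>0$ and $\partial_v\tilde{\mathcal E}_\sigma(0,0,0,1)<0$.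
   Context: Fix integers $L,H,F\ge1$ and a distribution $P_\theta$ on $\mathbb R^F$; $\mathbf 1_H$ is the all-ones vector. For $m\in\mathbb R^{H\times F}$, $r$ symmetric $H\times H$, $b\in\mathbb R^H$, $v\in\mathbb R$: $\tilde{\mathcal E}_\sigma(m,r,b,v)=\mathbb E\big[\sum_{\ell=1}^L(\delta_{\ell,\epsilon}-\frac1H\sum_{h=1}^H\sigma(\chi,b,v;h)_\ell)^2\big]$, $\chi_{h\ell}=\sum_fm_{hf}\chi^*_{f\ell}+\sum_{h'}r_{hh'}\xi_{h'\ell}$, with $\epsilon\sim\mathrm{Unif}(\{1,\dots,L\})$, $\theta\sim P_\theta$, and conditionally independent $\chi^*_{:\ell}\sim\mathcal N(\delta_{\ell,\epsilon}\theta,I_F)$, $\xi_{:\ell}\sim\mathcal N(0,I_H)$. The softmax-1 activation is $\sigma(\chi,b,v;h)_\ell=v e^{\chi_{h\ell}}/(e^{b_h}+\sum_{\ell'=1}^Le^{\chi_{h\ell'}})$. The gradient flow is $\partial_\tau b=-\nabla_b\tilde{\mathcal E}_\sigma$, $\partial_\tau v=-\nabla_v\tilde{\mathcal E}_\sigma$. *)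

(* Defs.v *)
From HB Require Import structures.
From mathcomp Require Import all_boot all_order all_algebra.
From mathcomp Require Import all_classical all_reals all_analysis.
Set Implicit Arguments. Unset Strict Implicit. Unset Printing Implicit Defensive.
Import Order.TTheory GRing.Theory Num.Theory.
Import numFieldNormedType.Exports.
Local Open Scope classical_set_scope.
Local Open Scope ring_scope.

Definition chi_in {R : realType} {H F L : nat} (m : 'M[R]_(H, F)) (r : 'M[R]_H)
  (cs : 'M[R]_(F, L)) (xi : 'M[R]_(H, L)) : 'M[R]_(H, L) := m *m cs + r *m xi.

Definition softmax1 {R : realType} {H L : nat} (chi : 'M[R]_(H, L))
  (b : 'I_H -> R) (v : R) (h : 'I_H) (l : 'I_L) : R :=
  v * expR (chi h l) / (expR (b h) + \sum_(l' < L) expR (chi h l')).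

Definition loss {R : realType} {H L : nat} (e : 'I_L) (chi : 'M[R]_(H, L))
  (b : 'I_H -> R) (v : R) : R :=
  \sum_(l < L) ((l == e)%:R - H%:R^-1 * \sum_(h < H) softmax1 chi b v h l) ^+ 2.

Definition Etilde {d} {T : measurableType d} {R : realType} {H F L : nat}
  (P : probability T R) (eps : T -> 'I_L) (cs : T -> 'M[R]_(F, L))
  (xi : T -> 'M[R]_(H, L)) (m : 'M[R]_(H, F)) (r : 'M[R]_H)
  (b : 'I_H -> R) (v : R) : R :=
  fine ('E_P[fun w => loss (eps w) (chi_in m r (cs w) (xi w)) b v])%E.

Definition cst_b {R : realType} {H : nat} (bt : R) : 'I_H -> R := fun _ => bt.

Definition bias_bump {R : realType} {H : nat} (b : 'I_H -> R) (h : 'I_H) (t : R)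
  : 'I_H -> R := fun h' => b h' + (if h' == h then t else 0).

Definition pb {R : realType} {H : nat} (E : ('I_H -> R) -> R -> R)
  (b : 'I_H -> R) (v : R) (h : 'I_H) : R := derive1 (fun t => E (bias_bump b h t) v) 0.
Definition pv {R : realType} {H : nat} (E : ('I_H -> R) -> R -> R)
  (b : 'I_H -> R) (v : R) : R := derive1 (fun w => E b w) v.

Definition fixed_point {R : realType} {H : nat} (E : ('I_H -> R) -> R -> R)
  (b : 'I_H -> R) (v : R) : Prop :=
  (forall h, pb E b v h = 0) /\ pv E b v = 0.

(* Jacobian, w.r.t. (bt, v), of the gradient-flow vector field restricted to
   uniform biases b = bt 1_H:  (bt, v) |-> (- pb E (bt 1) v h, - pv E (bt 1) v) *)
Definition reduced_jac {R : realType} {H : nat} (E : ('I_H -> R) -> R -> R)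
  (h : 'I_H) (bt v : R) : 'M[R]_2 :=
  \matrix_(i < 2, j < 2)
    if (i : nat) == 0%N then
      (if (j : nat) == 0%N then derive1 (fun x => - pb E (cst_b x) v h) bt
       else derive1 (fun w => - pb E (cst_b bt) w h) v)
    else
      (if (j : nat) == 0%N then derive1 (fun x => - pv E (cst_b x) v) bt
       else derive1 (fun w => - pv E (cst_b bt) w) v).

(* attractive (linearization): all eigenvalues (roots of the characteristic
   polynomial, which splits over R) are <= 0 and at least one is < 0; the zero
   eigenvalue being unavoidable along a curve of fixed points *)
Definition attractive {R : realType} (J : 'M[R]_2) : Prop :=
  exists a1 a2 : R, char_poly J = ('X - a1%:P) * ('X - a2%:P) /\
    a1 <= 0 /\ a2 <= 0 /\ (a1 < 0 \/ a2 < 0).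

(* Main.v *)
Require Import Defs.
From HB Require Import structures.
From mathcomp Require Import all_boot all_order all_algebra.
From mathcomp Require Import all_classical all_reals all_analysis.
From mathcomp Require Import ring lra.
Import Order.TTheory GRing.Theory Num.Theory.
Import numFieldNormedType.Exports.
Local Open Scope classical_set_scope.
Local Open Scope ring_scope.

Definition sE {R : realType} {H L : nat} (b : 'I_H -> R) (v : R) : R :=
  H%:R^-1 * \sum_(h < H) v / (expR (b h) + L%:R).

Lemma loss0 (R : realType) (H L : nat) (e : 'I_L) (b : 'I_H -> R) (v : R) :
  loss e (0 : 'M[R]_(H, L)) b v = 1 - 2 * @sE R H L b v + L%:R * (@sE R H L b v) ^+ 2.
Proof.
rewrite /loss.
set s := sE b v.
have hs : forall l : 'I_L, H%:R^-1 * \sum_(h < H) softmax1 (0 : 'M[R]_(H, L)) b v h l = s.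
  move=> l; rewrite /s /sE; congr (_ * _); apply: eq_bigr => h _.
  rewrite /softmax1 !mxE expR0 mulr1; congr (v / (_ + _)).
  by rewrite (eq_bigr (fun _ => 1)) ?sumr_const ?card_ord // => i _; rewrite mxE expR0.
rewrite (eq_bigr (fun l : 'I_L => (l == e)%:R * (1 - 2 * s) + s ^+ 2)); last first.
  by move=> l _; rewrite hs /s; case: (l == e) => /=; ring.
rewrite big_split /= sumr_const card_ord -big_distrl /=.
rewrite (bigD1 e) //= eqxx big1 ?addr0; last by move=> l /negbTE ->.
by rewrite /= mulr_natl /s; ring.
Qed.

Lemma Eform (R : realType) (L H F : nat) (d : measure_display) (T : measurableType d)
  (P : probability T R) (eps : T -> 'I_L) (cs : T -> 'M[R]_(F, L)) (xi : T -> 'M[R]_(H, L))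
  (b : 'I_H -> R) (v : R) :
  Etilde P eps cs xi 0 0 b v = 1 - 2 * @sE R H L b v + L%:R * (@sE R H L b v) ^+ 2.
Proof.
rewrite /Etilde.
have -> : (fun w => loss (eps w) (chi_in 0 0 (cs w) (xi w)) b v)
   = cst (1 - 2 * @sE R H L b v + L%:R * (@sE R H L b v) ^+ 2).
  by apply/funext => w; rewrite /chi_in !mul0mx addr0 loss0.
by rewrite expectation_cst.
Qed.

Lemma sE_cst (R : realType) (H L : nat) (hH : (0 < H)%N) (bt v : R) :
  @sE R H L (cst_b bt) v = v / (expR bt + L%:R).
Proof.
rewrite /sE /cst_b sumr_const card_ord.
have -> : v / (expR bt + L%:R) *+ H = H%:R * (v / (expR bt + L%:R)) by rewrite mulr_natl.
rewrite mulKf //.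
by rewrite pnatr_eq0 -lt0n.
Qed.

Lemma sE_bump (R : realType) (H L : nat) (bt v : R) (h : 'I_H) (t : R) :
  @sE R H L (bias_bump (cst_b bt) h t) v =
  H%:R^-1 * (v / (expR bt * expR t + L%:R) + \sum_(i < H | i != h) v / (expR bt + L%:R)).
Proof.
rewrite /sE (bigD1 h) //= /bias_bump /cst_b eqxx expRD; congr (_ * (_ + _)).
by apply: eq_bigr => i /negbTE ->; rewrite addr0.
Qed.


Lemma derQ (R : realType) (u : R -> R) (c x du : R) : is_derive x 1 u du ->
  is_derive x 1 (fun t => 1 - 2 * u t + c * u t ^+ 2) (2*(c*u x - 1)*du).
Proof.
move=> hu.
have := is_deriveD (is_deriveB (@is_derive_cst R R^o R^o (1:R) x 1) (is_deriveZ 2 hu)) (is_deriveZ c (is_deriveX 2 hu)).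
move=> /is_derive_eq h.
have -> : (fun t => 1 - 2 * u t + c * u t ^+ 2) = (cst 1 - 2 *: u) + c *: u ^+ 2.
  by apply/funext => t /=.
apply: h.
rewrite /GRing.scale/=. ring.
Qed.

Lemma pos_eL (R : realType) (L : nat) (x : R) : 0 < expR x + L%:R.
Proof. have := expR_gt0 x; have : 0 <= L%:R :> R := ler0n _ _; lra. Qed.

Lemma der_u (R : realType) (H L : nat) (bt v K : R) :
  is_derive (0:R) 1 (fun t => H%:R^-1 * (v / (expR bt * expR t + L%:R) + K))
    (H%:R^-1 * (v * (- (expR bt + L%:R) ^- 2 * expR bt))).
Proof.
have h1 := is_deriveD (is_deriveZ (expR bt) (is_derive_expR (0:R))) (@is_derive_cst R R^o R^o (L%:R:R) 0 1).
have nz : (expR bt *: expR + cst L%:R) (0:R) != 0.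
  by rewrite !fctE /GRing.scale /= expR0 mulr1 gt_eqF // pos_eL.
have := is_deriveZ (H%:R^-1) (is_deriveD (is_deriveZ v (is_deriveV nz h1)) (@is_derive_cst R R^o R^o K 0 1)).
move=> /is_derive_eq h; apply: h.
by rewrite !fctE /GRing.scale /= expR0 !mulr1 !addr0.
Qed.

Lemma cp2 (K : comRingType) (M : 'M[K]_2) (a b c d : K) :
  (forall i j : 'I_2, M i j = if (i : nat) == 0%N then (if (j : nat) == 0%N then a else b)
                          else (if (j : nat) == 0%N then c else d)) -> a * d = b * c ->
  char_poly M = ('X - 0%:P) * ('X - (a + d)%:P).
Proof.
move=> hM hdet.
rewrite /char_poly (expand_det_row _ 0) !big_ord_recl big_ord0 addr0 /cofactor !det_mx11 !mxE /=.
rewrite !hM /= !expr0 !mul1r expr1 mulr1n mulr0n !sub0r.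
have -> : - b%:P * (-1 * - c%:P) = - (a%:P * d%:P) :> {poly K}.
  by rewrite -polyCM hdet polyCM mulN1r opprK mulNr.
rewrite polyCD polyC0.
ring.
Qed.

Section P.
Context (R : realType) (L H F : nat) (hL : (0 < L)%N) (hH : (0 < H)%N)
  (d : measure_display) (T : measurableType d) (P : probability T R)
  (eps : T -> 'I_L) (cs : T -> 'M[R]_(F, L)) (xi : T -> 'M[R]_(H, L)).

Let E := fun (b : 'I_H -> R) (v : R) => Etilde P eps cs xi 0 0 b v.

Lemma P1 (bt v : R) (h : 'I_H) :
     is_derive (0 : R) (1 : R) (fun t => E (bias_bump (cst_b bt) h t) v)
       (- 2 * (L%:R * v / (L%:R + expR bt) - 1) * (v / H%:R)
          * (expR bt / (L%:R + expR bt) ^+ 2)).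
Proof.
set K := \sum_(i < H | i != h) v / (expR bt + L%:R).
set u := fun t => H%:R^-1 * (v / (expR bt * expR t + L%:R) + K).
have hu0 : u 0 = v / (expR bt + L%:R).
  rewrite /u /K -sE_bump.
  have -> : bias_bump (cst_b bt) h 0 = cst_b bt.
    by apply/funext => i; rewrite /bias_bump; case: (i == h); rewrite addr0.
  by rewrite sE_cst.
have -> : (fun t => E (bias_bump (cst_b bt) h t) v) = (fun t => 1 - 2 * u t + L%:R * u t ^+ 2).
  by apply/funext => t; rewrite /E Eform sE_bump.
have hd := @derQ R u (L%:R) 0 _ (@der_u R H L bt v K).
apply: is_derive_eq hd _.
rewrite hu0.
have ne1 := @pos_eL R L bt.
have ne2 : 0 < L%:R + expR bt by rewrite addrC.
have ne3 : H%:R != 0 :> R by rewrite pnatr_eq0 -lt0n.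
field.
by rewrite gt_eqF // ne3.
Qed.

Lemma P2 (bt v : R) :
     is_derive v (1 : R) (fun w => E (cst_b bt) w)
       (2 * (L%:R * v / (L%:R + expR bt) - 1) * (1 / (L%:R + expR bt))).
Proof.
set c := (expR bt + L%:R)^-1.
set u := fun w : R => c * w.
have -> : (fun w => E (cst_b bt) w) = (fun t => 1 - 2 * u t + L%:R * u t ^+ 2).
  by apply/funext => t; rewrite /E Eform sE_cst // /u /c [_^-1 * t]mulrC.
have hu : is_derive v 1 u (c *: 1).
  exact: (is_deriveZ c (@is_derive_id R R^o v 1)).
have hd := @derQ R u (L%:R) v _ hu.
apply: is_derive_eq hd _.
have ne1 := @pos_eL R L bt.
have ne2 : 0 < L%:R + expR bt by rewrite addrC.
rewrite /u /c /GRing.scale /=.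
field.
by rewrite !gt_eqF.
Qed.





Lemma derZ (f g : R -> R) (x df dg : R) : is_derive x (1:R) f df -> is_derive x (1:R) g dg ->
  f x = 0 -> derive1 (fun y => f y * g y) x = g x * df.
Proof.
move=> hf hg h0; rewrite derive1E.
have := is_deriveM hf hg; move=> [_ ->].
by rewrite h0 scale0r add0r /GRing.scale.
Qed.

Let Gb (bt v : R) := - 2 * (L%:R * v / (L%:R + expR bt) - 1) * (v / H%:R)
          * (expR bt / (L%:R + expR bt) ^+ 2).
Let Gv (bt v : R) := 2 * (L%:R * v / (L%:R + expR bt) - 1) * (1 / (L%:R + expR bt)).

Lemma pbE (bt v : R) (h : 'I_H) : pb E (cst_b bt) v h = Gb bt v.
Proof. by rewrite /pb derive1E; case: (P1 bt v h). Qed.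

Lemma pvE (bt v : R) : pv E (cst_b bt) v = Gv bt v.
Proof. by rewrite /pv derive1E; case: (P2 bt v). Qed.

Lemma Fzero (bt v : R) : (L%:R * v / (L%:R + expR bt) - 1 = 0) <-> L%:R * v = L%:R + expR bt.
Proof.
have ne : L%:R + expR bt != 0 by rewrite gt_eqF // addrC (@pos_eL R L bt).
split=> [/eqP|->]; last by rewrite divff // subrr.
rewrite subr_eq0 => /eqP h0.
by have := congr1 (fun x => x * (L%:R + expR bt)) h0; rewrite /= mulfVK // mul1r.
Qed.

Lemma FP (bt v : R) : fixed_point E (cst_b bt) v <-> L%:R * v = L%:R + expR bt.
Proof.
have ne : L%:R + expR bt != 0 by rewrite gt_eqF // addrC (@pos_eL R L bt).
split.
  case=> _; rewrite pvE => h0; apply/Fzero.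
  have -> : L%:R * v / (L%:R + expR bt) - 1 = Gv bt v * (L%:R + expR bt) / 2.
    by rewrite /Gv; field.
  by rewrite h0 !mul0r.
move/Fzero => hF; split.
  by move=> h; rewrite pbE /Gb hF !(mulr0, mul0r).
by rewrite pvE /Gv hF !(mulr0, mul0r).
Qed.

Lemma P5 : (forall h : 'I_H, 0 < pb E (cst_b 0) 1 h) /\ pv E (cst_b 0) 1 < 0.
Proof.
have hL1 : 0 < L%:R + 1 :> R by have : 0 <= L%:R :> R := ler0n _ _; lra.
have hH1 : 0 < H%:R :> R by rewrite ltr0n.
split.
  move=> h; rewrite pbE.
  have -> : Gb 0 1 = 2 / ((L%:R + 1) ^+ 3 * H%:R).
    rewrite /Gb expR0; field; by rewrite !gt_eqF.
  by rewrite divr_gt0 // mulr_gt0 // exprn_gt0.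
rewrite pvE.
have -> : Gv 0 1 = - (2 / (L%:R + 1) ^+ 2).
  rewrite /Gv expR0; field; by rewrite !gt_eqF.
by rewrite oppr_lt0 divr_gt0 // exprn_gt0.
Qed.

Lemma JAC (bt v : R) (h : 'I_H) : L%:R * v = L%:R + expR bt ->
  attractive (reduced_jac E h bt v).
Proof.
move=> hfix.
have hF0 := proj2 (Fzero bt v) hfix.
have pe : 0 < L%:R + expR bt by rewrite addrC (@pos_eL R L bt).
have ne : L%:R + expR bt != 0 by rewrite gt_eqF.
have hH1 : 0 < H%:R :> R by rewrite ltr0n.
have hL1 : 0 < L%:R :> R by rewrite ltr0n.
have vpos : 0 < v.
  have : 0 < L%:R * v by rewrite hfix.
  by rewrite pmulr_rgt0.
set e := expR bt.
pose Fx := fun y : R => L%:R * v / (L%:R + expR y) - 1.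
pose Fw := fun w : R => L%:R * w / (L%:R + e) - 1.
pose dFx := - (L%:R * v * e / (L%:R + e) ^+ 2).
pose dFw := L%:R / (L%:R + e).
pose gbx := fun y : R => 2 * (v / H%:R) * (expR y * ((L%:R + expR y) ^+ 2)^-1).
pose gbw := fun w : R => 2 * (w / H%:R) * (e * ((L%:R + e) ^+ 2)^-1).
pose gvx := fun y : R => -2 * (L%:R + expR y)^-1.
pose gvw := fun w : R => -2 * (L%:R + e)^-1.
have nz1 : (cst L%:R + expR) bt != 0 by rewrite !fctE /=; exact: ne.
have hFx : is_derive bt 1 Fx dFx.
  have := is_deriveB (is_deriveZ (L%:R * v) (is_deriveV nz1 (is_deriveD (@is_derive_cst R R^o R^o (L%:R:R) bt 1) (is_derive_expR bt)))) (@is_derive_cst R R^o R^o (1:R) bt 1).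
  move=> /is_derive_eq hh; apply: hh.
  rewrite /dFx /e !fctE /GRing.scale /=.
  field; by [].
have hFw : is_derive v 1 Fw dFw.
  have := is_deriveB (is_deriveM (is_deriveZ (L%:R) (@is_derive_id R R^o v 1)) (@is_derive_cst R R^o R^o ((L%:R + e)^-1) v 1)) (@is_derive_cst R R^o R^o (1:R) v 1).
  move=> /is_derive_eq hh; apply: hh.
  rewrite /dFw /e !fctE /GRing.scale /=.
  field; by [].
have nz2 : ((cst L%:R + expR) ^+ 2) bt != 0.
  by rewrite !fctE /= expf_neq0.
have hgbx := is_deriveZ (2 * (v / H%:R)) (is_deriveM (is_derive_expR bt) (is_deriveV nz2 (is_deriveX 2 (is_deriveD (@is_derive_cst R R^o R^o (L%:R:R) bt 1) (is_derive_expR bt))))).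
have hgbw := is_deriveM (is_deriveM (@is_derive_cst R R^o R^o (2:R) v 1) (is_deriveM (@is_derive_id R R^o v 1) (@is_derive_cst R R^o R^o (H%:R^-1) v 1))) (@is_derive_cst R R^o R^o (e * ((L%:R + e) ^+ 2)^-1) v 1).
have hgvx := is_deriveZ (-2) (is_deriveV nz1 (is_deriveD (@is_derive_cst R R^o R^o (L%:R:R) bt 1) (is_derive_expR bt))).
have hgvw := @is_derive_cst R R^o R^o (-2 * (L%:R + e)^-1) v 1.
have hA : derive1 (fun x => - pb E (cst_b x) v h) bt = gbx bt * dFx.
  have -> : (fun x => - pb E (cst_b x) v h) = (fun y => Fx y * gbx y).
    apply/funext => y; rewrite pbE /Gb /Fx /gbx.
    have : L%:R + expR y != 0 by rewrite gt_eqF // addrC (@pos_eL R L y).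
    move=> ney; field; by rewrite ney gt_eqF.
  by apply: (@derZ Fx gbx bt dFx _ hFx _ hF0).
have hB : derive1 (fun w => - pb E (cst_b bt) w h) v = gbw v * dFw.
  have -> : (fun w => - pb E (cst_b bt) w h) = (fun w => Fw w * gbw w).
    apply/funext => y; rewrite pbE /Gb /Fw /gbw /e.
    field; by rewrite ne gt_eqF.
  have hFw0 : Fw v = 0 by [].
  by apply: (@derZ Fw gbw v dFw _ hFw _ hFw0).
have hC : derive1 (fun x => - pv E (cst_b x) v) bt = gvx bt * dFx.
  have -> : (fun x => - pv E (cst_b x) v) = (fun y => Fx y * gvx y).
    apply/funext => y; rewrite pvE /Gv /Fx /gvx.
    have : L%:R + expR y != 0 by rewrite gt_eqF // addrC (@pos_eL R L y).
    move=> ney; field; by rewrite ney.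
  by apply: (@derZ Fx gvx bt dFx _ hFx _ hF0).
have hD : derive1 (fun w => - pv E (cst_b bt) w) v = gvw v * dFw.
  have -> : (fun w => - pv E (cst_b bt) w) = (fun w => Fw w * gvw w).
    apply/funext => y; rewrite pvE /Gv /Fw /gvw /e.
    field; by rewrite ne.
  have hFw0 : Fw v = 0 by [].
  by apply: (@derZ Fw gvw v dFw _ hFw _ hFw0).
have gbp : 0 < gbx bt.
  rewrite /gbx; apply: mulr_gt0; first by apply: mulr_gt0 => //; apply: divr_gt0.
  by apply: mulr_gt0; [exact: expR_gt0 | rewrite invr_gt0 exprn_gt0].
have dFxn : dFx < 0.
  rewrite /dFx oppr_lt0; apply: divr_gt0; last exact: exprn_gt0.
  by apply: mulr_gt0; [apply: mulr_gt0 | exact: expR_gt0].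
have gvn : gvw v < 0.
  by rewrite /gvw mulNr oppr_lt0 mulr_gt0 // invr_gt0.
have dFwp : 0 < dFw by rewrite /dFw divr_gt0.
have eb : gbw v = gbx bt by [].
have ev : gvx bt = gvw v by [].
have a_neg : gbx bt * dFx < 0 by rewrite pmulr_rlt0.
have d_neg : gvw v * dFw < 0 by rewrite nmulr_rlt0.
clearbody Fx Fw dFx dFw gbx gbw gvx gvw.
exists 0, (gbx bt * dFx + gvw v * dFw).
split.
  apply: (@cp2 _ _ (gbx bt * dFx) (gbw v * dFw) (gvx bt * dFx) (gvw v * dFw)); last first.
    rewrite eb ev; ring.
  move=> i j; rewrite /reduced_jac mxE.
  case: i => [[|[|i]] Hi] //=; case: j => [[|[|j]] Hj] //=.

have hs : gbx bt * dFx + gvw v * dFw < 0.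
  by have := ltrD a_neg d_neg; rewrite addr0.
split; first by [].
split; first exact: ltW.
by right.
Qed.

Theorem lemma6_sec :
  (forall (bt v : R) (h : 'I_H),
     is_derive (0 : R) (1 : R) (fun t => E (bias_bump (cst_b bt) h t) v)
       (- 2 * (L%:R * v / (L%:R + expR bt) - 1) * (v / H%:R)
          * (expR bt / (L%:R + expR bt) ^+ 2))) /\
  (forall bt v : R,
     is_derive v (1 : R) (fun w => E (cst_b bt) w)
       (2 * (L%:R * v / (L%:R + expR bt) - 1) * (1 / (L%:R + expR bt)))) /\
  (forall bt v : R, fixed_point E (cst_b bt) v <-> L%:R * v = L%:R + expR bt) /\
  (forall (bt v : R) (h : 'I_H), L%:R * v = L%:R + expR bt ->
     attractive (reduced_jac E h bt v)) /\
  (forall h : 'I_H, 0 < pb E (cst_b 0) 1 h) /\ pv E (cst_b 0) 1 < 0.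
Proof.
split; first exact: P1.
split; first exact: P2.
split; first exact: FP.
split; first exact: JAC.
exact: P5.
Qed.

End P.

Theorem lemma6 (R : realType) (L H F : nat)
  (hL : (0 < L)%N) (hH : (0 < H)%N) (hF : (0 < F)%N)
  (d : measure_display) (T : measurableType d) (P : probability T R)
  (eps : T -> 'I_L) (cs : T -> 'M[R]_(F, L)) (xi : T -> 'M[R]_(H, L))
  (eps_meas : forall l : 'I_L, measurable (eps @^-1` [set l]))
  (eps_unif : forall l : 'I_L, P (eps @^-1` [set l]) = (L%:R^-1)%:E) :
  let E := fun (b : 'I_H -> R) (v : R) => Etilde P eps cs xi 0 0 b v in
  (forall (bt v : R) (h : 'I_H),
     is_derive (0 : R) (1 : R) (fun t => E (bias_bump (cst_b bt) h t) v)
       (- 2 * (L%:R * v / (L%:R + expR bt) - 1) * (v / H%:R)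
          * (expR bt / (L%:R + expR bt) ^+ 2))) /\
  (forall bt v : R,
     is_derive v (1 : R) (fun w => E (cst_b bt) w)
       (2 * (L%:R * v / (L%:R + expR bt) - 1) * (1 / (L%:R + expR bt)))) /\
  (forall bt v : R, fixed_point E (cst_b bt) v <-> L%:R * v = L%:R + expR bt) /\
  (forall (bt v : R) (h : 'I_H), L%:R * v = L%:R + expR bt ->
     attractive (reduced_jac E h bt v)) /\
  (forall h : 'I_H, 0 < pb E (cst_b 0) 1 h) /\ pv E (cst_b 0) 1 < 0.
Proof.
move=> E.
exact: (@lemma6_sec R L H F hL hH d T P eps cs xi).
Qed.
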